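(* Let $a,b,c>0$ and let $d,e$ be real numbers, not in $\{0,-1,-2,\dots\}$, such that $de\ge 3abc$ and $$d+e\ \ge\ \max\Big\{a+b+c,\ \alpha(a,b,c),\ 3(ab+bc+ac)-7abc\Big\},\qquad \alpha(a,b,c)=\tfrac13\big(2(ab+bc+ac)+3(a+b+c)-6abc-1\big).$$ Then $f(z)=z\,{}_3F_2(a,b,c;d,e;z^2)$ is close-to-convex in $\mathbb{D}$ with respect to $\frac12\log\big((1+z)/(1-z)\big)$.
   Context: $\mathbb{D}=\{z\in\mathbb{C}:|z|<1\}$. For $x\in\mathbb{C}$, $(x)_0=1$ and $(x)_n=x(x+1)\cdots(x+n-1)$ for $n\ge1$. The Clausen hypergeometric function is ${}_3F_2(a,b,c;d,e;z)=\sum_{n=0}^\infty \frac{(a)_n(b)_n(c)_n}{(d)_n(e)_n(1)_n}z^n$ for $|z|<1$ (with $d,e\notin\{0,-1,-2,\dots\}$). A normalized analytic function $f$ on $\mathbb{D}$ ($f(0)=0$, $f'(0)=1$) is close-to-convex with respect to a convex univalent function $g$ on $\mathbb{D}$ if $f$ is univalent on $\mathbb{D}$ and $\operatorname{Re}\big(f'(z)/g'(z)\big)>0$ for all $z\in\mathbb{D}$. Here $g(z)=\frac12\log\frac{1+z}{1-z}$, which is convex univalent on $\mathbb{D}$, with $g'(z)=1/(1-z^2)$. *)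

(* Defs.v *)
From Stdlib Require Import Reals Factorial.
From Coquelicot Require Import Coquelicot.
Open Scope R_scope.

Fixpoint poch (x : R) (n : nat) : R :=
  match n with
  | O => 1
  | S k => poch x k * (x + INR k)
  end.

(* Sum of a complex series, computed componentwise
   (equals the limit of partial sums whenever the series converges). *)
Definition CSeries (u : nat -> C) : C :=
  (Series (fun n => Re (u n)), Series (fun n => Im (u n))).

Definition F32 (a b c d e : R) (z : C) : C :=
  CSeries (fun n =>
    (RtoC (poch a n * poch b n * poch c n
           / (poch d n * poch e n * INR (fact n))) * Cpow z n)%C).

Definition unit_disk (z : C) : Prop := Cmod z < 1.

Definition analytic_on_disk (f : C -> C) : Prop :=
  forall z, unit_disk z -> ex_derive f z.

Definition univalent_on_disk (f : C -> C) : Prop :=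
  analytic_on_disk f /\
  (forall z w, unit_disk z -> unit_disk w -> f z = f w -> z = w).

Definition normalized (f : C -> C) : Prop :=
  analytic_on_disk f /\ f (RtoC 0) = RtoC 0 /\ is_derive f (RtoC 0) (RtoC 1).

Definition close_to_convex_wrt (f g : C -> C) : Prop :=
  normalized f /\ univalent_on_disk f /\ analytic_on_disk g /\
  (forall z (f' g' : C), unit_disk z ->
     is_derive f z f' -> is_derive g z g' -> 0 < Re (f' / g')%C).

(* g(z) = (1/2) log((1+z)/(1-z)) = sum_{n>=0} z^(2n+1)/(2n+1) on the disk *)
Definition half_log_ratio (z : C) : C :=
  CSeries (fun n => (Cpow z (2 * n + 1) / RtoC (INR (2 * n + 1)))%C).

Definition alpha_abc (a b c : R) : R :=
  (2 * (a * b + b * c + a * c) + 3 * (a + b + c) - 6 * a * b * c - 1) / 3.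

Definition not_nonpos_int (x : R) : Prop := forall k : nat, x <> - INR k.

(* Main.v *)
Require Import Defs.
From Stdlib Require Import Reals Lra Psatz Factorial.
From Coquelicot Require Import Coquelicot.
Open Scope R_scope.

Lemma INR_odd n : INR (2 * n + 1) = 2 * INR n + 1.
Proof. rewrite plus_INR, mult_INR; simpl; ring. Qed.

Definition Acoef (a b c d e : R) (n : nat) : R :=
  poch a n * poch b n * poch c n / (poch d n * poch e n * INR (fact n)).

Lemma poch_pos x n : 0 < x -> 0 < poch x n.
Proof.
  intros Hx; induction n; simpl. lra.
  apply Rmult_lt_0_compat; auto. pose proof (pos_INR n); lra.
Qed.

Lemma Acoef_pos a b c d e n : 0 < a -> 0 < b -> 0 < c -> 0 < d -> 0 < e ->
  0 < Acoef a b c d e n.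
Proof.
  intros; unfold Acoef.
  pose proof (poch_pos a n H); pose proof (poch_pos b n H0);
  pose proof (poch_pos c n H1); pose proof (poch_pos d n H2);
  pose proof (poch_pos e n H3). pose proof (INR_fact_lt_0 n).
  apply Rdiv_lt_0_compat; repeat apply Rmult_lt_0_compat; auto.
Qed.

Lemma Acoef_S a b c d e n : 0 < d -> 0 < e ->
  Acoef a b c d e (S n) = Acoef a b c d e n *
    ((a + INR n) * (b + INR n) * (c + INR n)) /
    ((d + INR n) * (e + INR n) * (INR n + 1)).
Proof.
  intros Hd He; unfold Acoef; simpl poch.
  change (fact (S n)) with (S n * fact n)%nat.
  rewrite mult_INR, S_INR.
  pose proof (poch_pos d n Hd); pose proof (poch_pos e n He).
  pose proof (INR_fact_lt_0 n). pose proof (pos_INR n).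
  field; repeat split; lra.
Qed.

Lemma Acoef_0 a b c d e : Acoef a b c d e 0 = 1.
Proof. unfold Acoef; simpl. field. Qed.

Section Hyp.
Variables a b c d e : R.
Hypothesis Ha : 0 < a.
Hypothesis Hb : 0 < b.
Hypothesis Hc : 0 < c.
Hypothesis Hd : 0 < d.
Hypothesis He : 0 < e.
Hypothesis H1 : d * e >= 3 * a * b * c.
Hypothesis H2 : d + e >= a + b + c.
Hypothesis H3 : d + e >= alpha_abc a b c.
Hypothesis H4 : d + e >= 3 * (a * b + b * c + a * c) - 7 * a * b * c.

Definition Bc n := INR (2 * n + 1) * Acoef a b c d e n.

Lemma poly_ineq x : 0 <= x ->
  (2*x+3)*((a+x)*(b+x)*(c+x)) <= (2*x+1)*((d+x)*(e+x)*(x+1)).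
Proof.
  intros Hx. unfold alpha_abc in H3.
  set (s1 := a+b+c). set (s2 := a*b+b*c+a*c). set (s3 := a*b*c).
  set (t1 := d+e). set (t2 := d*e).
  assert (E: (2*x+1)*((d+x)*(e+x)*(x+1)) - (2*x+3)*((a+x)*(b+x)*(c+x)) =
    2*(t1-s1)*(x*x*x) + (2*t2+3*t1+1-2*s2-3*s1)*(x*x) + (3*t2+t1-2*s3-3*s2)*x + (t2-3*s3)).
  { unfold s1,s2,s3,t1,t2; ring. }
  assert (0 <= 2*(t1-s1)*(x*x*x)).
  { apply Rmult_le_pos. unfold t1,s1; lra. repeat apply Rmult_le_pos; lra. }
  assert (0 <= (2*t2+3*t1+1-2*s2-3*s1)*(x*x)).
  { apply Rmult_le_pos. unfold t1,t2,s1,s2,s3 in *. lra. nra. }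
  assert (0 <= (3*t2+t1-2*s3-3*s2)*x).
  { apply Rmult_le_pos. unfold t1,t2,s1,s2,s3 in *. lra. lra. }
  assert (0 <= t2 - 3*s3) by (unfold t2,s3; lra).
  lra.
Qed.

Lemma Bc_S n : Bc (S n) <= Bc n.
Proof.
  unfold Bc. rewrite Acoef_S by auto.
  pose proof (Acoef_pos a b c d e n Ha Hb Hc Hd He) as HA.
  pose proof (pos_INR n) as Hn.
  rewrite !INR_odd, S_INR.
  replace (2 * (INR n + 1) + 1) with (2 * INR n + 3) by ring.
  set (x := INR n) in *.
  assert (Hden : 0 < (d + x) * (e + x) * (x + 1)) by (repeat apply Rmult_lt_0_compat; lra).
  pose proof (poly_ineq x Hn).
  set (A := Acoef a b c d e n) in *.
  set (N := (a + x) * (b + x) * (c + x)) in *.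
  set (D := (d + x) * (e + x) * (x + 1)) in *.
  assert (Key: (2*x+3)*(A*N) <= (2*x+1)*A*D).
  { replace ((2*x+3)*(A*N)) with (A*((2*x+3)*N)) by ring.
    replace ((2*x+1)*A*D) with (A*((2*x+1)*D)) by ring.
    apply Rmult_le_compat_l; lra. }
  replace ((2 * x + 3) * (A * N / D)) with (((2*x+3)*(A*N))/D) by (field; lra).
  apply Rle_div_l; auto.
Qed.

Lemma Bc_0 : Bc 0 = 1.
Proof. unfold Bc; rewrite Acoef_0; simpl; ring. Qed.

Lemma Bc_pos n : 0 < Bc n.
Proof. unfold Bc. apply Rmult_lt_0_compat. apply lt_0_INR; lia.
  apply Acoef_pos; auto. Qed.

Lemma Bc_le1 n : Bc n <= 1.
Proof. induction n. rewrite Bc_0; lra. pose proof (Bc_S n); lra. Qed.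

Lemma Acoef_le1 n : Rabs (Acoef a b c d e n) <= 1.
Proof.
  pose proof (Bc_le1 n). pose proof (Acoef_pos a b c d e n Ha Hb Hc Hd He).
  unfold Bc in H. rewrite Rabs_pos_eq by lra.
  assert (1 <= INR (2*n+1)) by (apply (le_INR 1); lia).
  nra.
Qed.
End Hyp.

Lemma im_le_Cmod z : Rabs (Im z) <= Cmod z.
Proof.
  destruct z as [x y]; unfold Cmod, Im; simpl.
  rewrite <- sqrt_Rsqr_abs. apply sqrt_le_1_alt. unfold Rsqr.
  pose proof (pow2_ge_0 x). nra.
Qed.

Definition AS (u : nat -> C) := ex_series (fun n => Cmod (u n)).

Lemma ex_series_le_R (u b : nat -> R) :
  (forall n, Rabs (u n) <= b n) -> ex_series b -> ex_series u.
Proof.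
  intros H Hb. apply ex_series_Rabs.
  apply (ex_series_le (K:=R_AbsRing) (V:=R_CompleteNormedModule) _ b); auto.
  intros n. change (Rabs (Rabs (u n)) <= b n). rewrite Rabs_Rabsolu; auto.
Qed.

Lemma AS_re u : AS u -> ex_series (fun n => Re (u n)).
Proof. intros H; apply (ex_series_le_R _ _ (fun n => re_le_Cmod (u n)) H). Qed.
Lemma AS_im u : AS u -> ex_series (fun n => Im (u n)).
Proof. intros H; apply (ex_series_le_R _ _ (fun n => im_le_Cmod (u n)) H). Qed.

Lemma AS_le u b : (forall n, Cmod (u n) <= b n) -> ex_series b -> AS u.
Proof.
  intros H Hb. apply (ex_series_le_R _ b); auto. intros n.
  rewrite Rabs_pos_eq; auto. apply Cmod_ge_0.
Qed.

Lemma exR_plus (u v : nat -> R) : ex_series u -> ex_series v -> ex_series (fun n => u n + v n).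
Proof. intros Hu Hv. exact (ex_series_plus (K:=R_AbsRing) u v Hu Hv). Qed.
Lemma exR_minus (u v : nat -> R) : ex_series u -> ex_series v -> ex_series (fun n => u n - v n).
Proof. intros Hu Hv. exact (ex_series_minus (K:=R_AbsRing) u v Hu Hv). Qed.
Lemma exR_scal (k : R) (u : nat -> R) : ex_series u -> ex_series (fun n => k * u n).
Proof. intros Hu. exact (ex_series_scal_l (K:=R_AbsRing) k u Hu). Qed.

Lemma exR_scal_r (k : R) (u : nat -> R) : ex_series u -> ex_series (fun n => u n * k).
Proof. intros Hu. eapply ex_series_ext; [|apply (exR_scal k u Hu)]. intros n; simpl; ring. Qed.

Lemma Series_zero : Series (fun _ => 0) = 0.
Proof.
  rewrite (Series_ext _ (fun n => 0 * 0)) by (intros; ring).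
  rewrite Series_scal_l; ring.
Qed.

Lemma Series_le_gen (u v : nat -> R) : ex_series u -> ex_series v ->
  (forall n, u n <= v n) -> Series u <= Series v.
Proof.
  intros Hu Hv H.
  assert (0 <= Series (fun n => v n - u n)).
  { rewrite <- Series_zero. apply Series_le.
    intros n; specialize (H n); lra. apply exR_minus; auto. }
  rewrite Series_minus in H0 by auto. lra.
Qed.

Lemma CSeries_ext u v : (forall n, u n = v n) -> CSeries u = CSeries v.
Proof.
  intros H; unfold CSeries. rewrite (Series_ext _ (fun n => Re (v n))).
  rewrite (Series_ext (fun n => Im (u n)) (fun n => Im (v n))). auto.
  intros; rewrite H; auto. intros; rewrite H; auto.
Qed.

Lemma AS_plus u v : AS u -> AS v -> AS (fun n => u n + v n)%C.
Proof.
  intros Hu Hv. apply (AS_le _ (fun n => Cmod (u n) + Cmod (v n))).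
  intros; apply Cmod_triangle. apply exR_plus; auto.
Qed.

Lemma AS_scal k u : AS u -> AS (fun n => k * u n)%C.
Proof.
  intros Hu. apply (AS_le _ (fun n => Cmod k * Cmod (u n))).
  intros; rewrite Cmod_mult; lra. apply exR_scal; auto.
Qed.

Lemma CSeries_plus u v : AS u -> AS v ->
  CSeries (fun n => u n + v n)%C = (CSeries u + CSeries v)%C.
Proof.
  intros Hu Hv. unfold CSeries. unfold Cplus; simpl.
  f_equal.
  - rewrite <- Series_plus by (first [exact (AS_re u Hu) | exact (AS_re v Hv)]). apply Series_ext; intros; reflexivity.
  - rewrite <- Series_plus by (first [exact (AS_im u Hu) | exact (AS_im v Hv)]). apply Series_ext; intros; reflexivity.
Qed.

Lemma CSeries_scal k u : AS u ->
  CSeries (fun n => k * u n)%C = (k * CSeries u)%C.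
Proof.
  intros Hu. unfold CSeries. unfold Cmult; simpl.
  pose proof (AS_re u Hu). pose proof (AS_im u Hu).
  f_equal.
  - rewrite <- !Series_scal_l, <- Series_minus by (apply exR_scal; auto).
    apply Series_ext; intros; reflexivity.
  - rewrite <- !Series_scal_l, <- Series_plus by (apply exR_scal; auto).
    apply Series_ext; intros; reflexivity.
Qed.

Lemma CSeries_shift u : AS u ->
  CSeries u = (u 0%nat + CSeries (fun n => u (S n)))%C.
Proof.
  intros Hu. unfold CSeries. unfold Cplus; simpl.
  rewrite (Series_incr_1 (fun n => Re (u n))) by (apply AS_re; auto).
  rewrite (Series_incr_1 (fun n => Im (u n))) by (apply AS_im; auto).
  destruct (u 0%nat); reflexivity.
Qed.

Lemma CSeries_norm u : AS u -> Cmod (CSeries u) <= Series (fun n => Cmod (u n)).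
Proof.
  intros Hu. set (X := CSeries u).
  destruct (Ceq_dec X 0) as [H0|H0].
  - rewrite H0, Cmod_0. rewrite <- Series_zero. apply Series_le.
    intros; split; [lra| apply Cmod_ge_0]. exact Hu.
  - set (w := (Cconj X / RtoC (Cmod X))%C).
    assert (Hm : 0 < Cmod X) by (apply Cmod_gt_0; auto).
    assert (E1 : Re (w * X) = Cmod X).
    { unfold w. replace (Cconj X / RtoC (Cmod X) * X)%C with
        ((X * Cconj X) / RtoC (Cmod X))%C by (field; intro Hc; apply RtoC_inj in Hc; lra).
      rewrite <- Cmod2_conj.
      rewrite <- RtoC_div by lra. unfold Re, RtoC; simpl. field. lra. }
    assert (Cw : Cmod w = 1).
    { unfold w. rewrite Cmod_div.
      rewrite Cmod_conj, Cmod_R, Rabs_pos_eq by lra. field; lra.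
      intro Hc; apply RtoC_inj in Hc; lra. }
    rewrite <- E1. unfold X. rewrite <- CSeries_scal by auto.
    unfold CSeries at 1; simpl.
    apply Series_le_gen. apply (AS_re (fun n => w * u n)%C). apply AS_scal; auto.
    exact Hu.
    intros n. eapply Rle_trans; [apply Rle_abs|].
    eapply Rle_trans; [apply (re_le_Cmod (w * u n)%C)|].
    rewrite Cmod_mult, Cw; lra.
Qed.

Lemma derive_C_est (F : C -> C) x L :
  (forall eps, 0 < eps -> exists delta, 0 < delta /\ forall y, Cmod (y - x) < delta ->
     Cmod (F y - F x - (y - x) * L)%C <= eps * Cmod (y - x)) ->
  is_derive F x L.
Proof.
  intros H. split.
  - apply is_linear_scal_l.
  - intros x' Hx'. apply (is_filter_lim_locally_unique (K:=C_AbsRing) (V:=AbsRing_NormedModule C_AbsRing)) in Hx'. subst x'.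
    intros eps.
    destruct (H eps (cond_pos eps)) as [d [Hd Hy]].
    exists (mkposreal d Hd). intros y Hy'.
    exact (Hy y Hy').
Qed.

Lemma derive_C_est' (F : C -> C) x L :
  (forall eps, 0 < eps -> exists delta, 0 < delta /\ forall y, Cmod (y - x) < delta ->
     Cmod (F y - F x - (y - x) * L)%C <= eps * Cmod (y - x)) ->
  is_derive (K:=C_AbsRing) (V:=AbsRing_NormedModule C_AbsRing) F x L.
Proof.
  intros H. split.
  - apply is_linear_scal_l.
  - intros x' Hx'. apply (is_filter_lim_locally_unique (K:=C_AbsRing) (V:=AbsRing_NormedModule C_AbsRing)) in Hx'. subst x'.
    intros eps.
    destruct (H eps (cond_pos eps)) as [d [Hd Hy]].
    exists (mkposreal d Hd). intros y Hy'.
    exact (Hy y Hy').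
Qed.

Lemma pow_diff_id (x h : C) m :
  ((x+h)^(S (S m)) - x^(S (S m)) - RtoC (INR (S (S m))) * x^(S m) * h)%C =
  ((x+h) * ((x+h)^(S m) - x^(S m) - RtoC (INR (S m)) * x^m * h)
    + RtoC (INR (S m)) * x^m * (h*h))%C.
Proof.
  rewrite (Cpow_S (x+h) (S m)), !(Cpow_S x (S m)), (Cpow_S x m).
  rewrite (S_INR (S m)), RtoC_plus. ring.
Qed.

Lemma pow_diff_bound (x h : C) r m : 0 < r -> Cmod x <= r -> Cmod (x+h) <= r ->
  Cmod ((x+h)^(S m) - x^(S m) - RtoC (INR (S m)) * x^m * h)%C
    <= INR (S m) ^ 2 * r ^ m * Cmod h ^ 2 / r.
Proof.
  intros Hr Hx Hxh. induction m.
  - simpl. replace ((x + h) * 1 - x * 1 - RtoC 1 * 1 * h)%C with (RtoC 0) by (simpl; ring).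
    rewrite Cmod_0. pose proof (Cmod_ge_0 h).
    apply Rle_div_r; auto. rewrite Rmult_0_l. apply Rmult_le_pos; [lra|]. apply pow2_ge_0.
  - rewrite pow_diff_id.
    eapply Rle_trans; [apply Cmod_triangle|].
    rewrite !Cmod_mult, Cmod_R, Rabs_pos_eq by apply pos_INR.
    rewrite Cmod_pow.
    set (P := Cmod ((x + h) ^ S m - x ^ S m - RtoC (INR (S m)) * x ^ m * h)%C) in *.
    pose proof (Cmod_ge_0 h) as Hh. pose proof (Cmod_ge_0 (x+h)) as Hxh0.
    pose proof (Cmod_ge_0 x) as Hx0.
    assert (Hp : 0 <= P) by apply Cmod_ge_0.
    assert (Hxm : Cmod x ^ m <= r ^ m) by (apply pow_incr; lra).
    assert (Hn : 0 <= INR (S m)) by apply pos_INR.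
    assert (B1 : Cmod (x+h) * P <= r * (INR (S m) ^ 2 * r ^ m * Cmod h ^ 2 / r)).
    { apply Rmult_le_compat; auto. }
    replace (r * (INR (S m) ^ 2 * r ^ m * Cmod h ^ 2 / r)) with
      (INR (S m) ^ 2 * r ^ m * Cmod h ^ 2) in B1 by (field; lra).
    assert (B2 : INR (S m) * Cmod x ^ m * (Cmod h * Cmod h) <= INR (S m) * r ^ m * Cmod h ^ 2).
    { simpl. rewrite Rmult_1_r. apply Rmult_le_compat_r. apply Rmult_le_pos; auto.
      apply Rmult_le_compat_l; auto. }
    replace (INR (S (S m)) ^ 2 * r ^ S m * Cmod h ^ 2 / r) with
      (INR (S (S m)) ^ 2 * r ^ m * Cmod h ^ 2) by (simpl; field; lra).
    rewrite (S_INR (S m)).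
    assert (0 <= r ^ m * Cmod h ^ 2) by (apply Rmult_le_pos; [apply pow_le; lra| apply pow2_ge_0]).
    nra.
Qed.

Definition Maj (r : R) (n : nat) : R := INR (2*n+1) ^ 2 * r ^ (2*n).

Lemma INR_odd' n : INR (2 * n + 1) = 2 * INR n + 1.
Proof. rewrite plus_INR, mult_INR; simpl; ring. Qed.

Lemma Maj_ex r : 0 < r < 1 -> ex_series (Maj r).
Proof.
  intros Hr.
  assert (H : ex_series (fun n => Rabs (Maj r n))).
  { apply (ex_series_DAlembert _ (r^2)).
    - nra.
    - intros n; unfold Maj. apply Rmult_integral_contrapositive; split.
      apply pow_nonzero. rewrite INR_odd'. pose proof (pos_INR n); lra.
      apply pow_nonzero; lra.
    - assert (L1 : is_lim_seq (fun n => / (INR n + /2)) 0).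
      { replace (Finite 0) with (Rbar_inv p_infty) by reflexivity.
        apply is_lim_seq_inv; [|discriminate].
        apply (is_lim_seq_plus _ _ p_infty (/2) p_infty).
        apply is_lim_seq_INR. apply is_lim_seq_const. reflexivity. }
      assert (L2 : is_lim_seq (fun n => (1 + / (INR n + /2)) * (1 + / (INR n + /2)) * (r*r)) ((1+0)*(1+0)*(r*r))).
      { apply is_lim_seq_mult'. apply is_lim_seq_mult';
        apply is_lim_seq_plus'; auto; apply is_lim_seq_const. apply is_lim_seq_const. }
      replace (r^2) with ((1+0)*(1+0)*(r*r)) by ring.
      eapply is_lim_seq_ext; [|exact L2]. intros n.
      unfold Maj. rewrite !INR_odd'. rewrite S_INR.
      pose proof (pos_INR n).
      replace (2 * S n)%nat with (2 * n + 2)%nat by lia. rewrite pow_add.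
      assert (0 < r ^ (2*n)) by (apply pow_lt; lra).
      rewrite Rabs_pos_eq.
      field. repeat split; try lra.
      apply Rmult_le_pos; [|apply Rlt_le, Rinv_0_lt_compat].
      apply Rmult_le_pos; [apply pow2_ge_0| apply Rmult_le_pos; [lra|apply pow2_ge_0]].
      apply Rmult_lt_0_compat; [apply pow_lt; lra | lra]. }
  apply ex_series_Rabs in H. exact H.
Qed.

Definition oddS (a : nat -> R) (z : C) : C :=
  CSeries (fun n => RtoC (a n) * Cpow z (2*n+1))%C.
Definition oddD (a : nat -> R) (z : C) : C :=
  CSeries (fun n => RtoC (a n * INR (2*n+1)) * Cpow z (2*n))%C.

Lemma Maj_ge r n : 0 <= r -> r ^ (2*n) <= Maj r n.
Proof.
  intros Hr. unfold Maj. rewrite INR_odd'. pose proof (pos_INR n).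
  pose proof (pow_le r (2*n) Hr).
  assert (1 <= (2 * INR n + 1) ^ 2) by nra. nra.
Qed.

Lemma Maj_ge' r n : 0 <= r -> INR (2*n+1) * r ^ (2*n) <= Maj r n.
Proof.
  intros Hr. unfold Maj. rewrite INR_odd'. pose proof (pos_INR n).
  pose proof (pow_le r (2*n) Hr).
  assert (2 * INR n + 1 <= (2 * INR n + 1) ^ 2) by nra. nra.
Qed.

Lemma Maj_pos r n : 0 <= r -> 0 <= Maj r n.
Proof. intros; unfold Maj; apply Rmult_le_pos. apply pow2_ge_0. apply pow_le; auto. Qed.

Section Odd.
Variable a : nat -> R.
Hypothesis Ha : forall n, Rabs (a n) <= 1.

Lemma AS_oddS z r : Cmod z <= r -> 0 < r < 1 ->
  AS (fun n => RtoC (a n) * Cpow z (2*n+1))%C.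
Proof.
  intros Hz Hr. apply (AS_le _ (Maj r)); [|apply Maj_ex; auto].
  intros n. rewrite Cmod_mult, Cmod_R, Cmod_pow.
  eapply Rle_trans; [|apply Maj_ge; lra].
  pose proof (Ha n). pose proof (Rabs_pos (a n)).
  assert (Cmod z ^ (2*n+1) <= r ^ (2*n+1)) by (apply pow_incr; split; [apply Cmod_ge_0|auto]).
  pose proof (pow_le r (2*n) (Rlt_le _ _ (proj1 Hr))).
  pose proof (pow_le (Cmod z) (2*n+1) (Cmod_ge_0 z)).
  assert (r ^ (2*n+1) <= r ^ (2*n)) by (rewrite pow_add, pow_1; nra).
  assert (Rabs (a n) * Cmod z ^ (2 * n + 1) <= Cmod z ^ (2 * n + 1)) by nra.
  lra.
Qed.

Lemma AS_oddD z r : Cmod z <= r -> 0 < r < 1 ->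
  AS (fun n => RtoC (a n * INR (2*n+1)) * Cpow z (2*n))%C.
Proof.
  intros Hz Hr. apply (AS_le _ (Maj r)); [|apply Maj_ex; auto].
  intros n. rewrite Cmod_mult, Cmod_R, Cmod_pow.
  eapply Rle_trans; [|apply Maj_ge'; lra].
  pose proof (Ha n). pose proof (Rabs_pos (a n)).
  assert (Cmod z ^ (2*n) <= r ^ (2*n)) by (apply pow_incr; split; [apply Cmod_ge_0|auto]).
  rewrite Rabs_mult, (Rabs_pos_eq (INR _)) by apply pos_INR.
  pose proof (pos_INR (2*n+1)).
  pose proof (pow_le (Cmod z) (2*n) (Cmod_ge_0 z)).
  assert (Rabs (a n) * INR (2*n+1) <= INR (2*n+1)) by nra.
  apply Rmult_le_compat; auto. apply Rmult_le_pos; auto.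
Qed.

Lemma odd_deriv x : Cmod x < 1 -> is_derive (oddS a) x (oddD a x).
Proof.
  intros Hx. apply derive_C_est. intros eps Heps.
  pose proof (Cmod_ge_0 x) as Hx0.
  set (r := (1 + Cmod x) / 2).
  assert (Hr : 0 < r < 1) by (unfold r; lra).
  assert (Hxr : Cmod x < r) by (unfold r; lra).
  set (SM := Series (Maj r)).
  assert (HS : 0 <= SM).
  { unfold SM. rewrite <- Series_zero. apply Series_le.
    intros; split; [lra| apply Maj_pos; lra]. apply Maj_ex; auto. }
  exists (Rmin (r - Cmod x) (eps * r / (SM + 1))). split.
  { apply Rmin_pos. lra. apply Rdiv_lt_0_compat; [nra|lra]. }
  intros y Hy.
  set (h := (y - x)%C) in *.
  assert (Hh1 : Cmod h < r - Cmod x) by (eapply Rlt_le_trans; [exact Hy| apply Rmin_l]).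
  assert (Hh2 : Cmod h < eps * r / (SM + 1)) by (eapply Rlt_le_trans; [exact Hy| apply Rmin_r]).
  assert (Hyx : y = (x + h)%C) by (unfold h; ring).
  assert (Hyr : Cmod y <= r).
  { rewrite Hyx. eapply Rle_trans; [apply Cmod_triangle|]. lra. }
  set (P := fun n => (RtoC (a n) * ((x+h)^(S (2*n)) - x^(S (2*n)) - RtoC (INR (S (2*n))) * x^(2*n) * h))%C).
  assert (HU := AS_oddS y r Hyr Hr).
  assert (HV := AS_scal (-1) _ (AS_oddS x r (Rlt_le _ _ Hxr) Hr)).
  assert (HW := AS_scal (-h) _ (AS_oddD x r (Rlt_le _ _ Hxr) Hr)).
  assert (Eq : (oddS a y - oddS a x - h * oddD a x)%C = CSeries P).
  { unfold oddS, oddD.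
    replace (CSeries (fun n : nat => (RtoC (a n) * y ^ (2 * n + 1))%C) -
      CSeries (fun n : nat => (RtoC (a n) * x ^ (2 * n + 1))%C) -
      h * CSeries (fun n : nat => (RtoC (a n * INR (2 * n + 1)) * x ^ (2 * n))%C))%C
     with (CSeries (fun n : nat => (RtoC (a n) * y ^ (2 * n + 1))%C) +
      (-1) * CSeries (fun n : nat => (RtoC (a n) * x ^ (2 * n + 1))%C) +
      (-h) * CSeries (fun n : nat => (RtoC (a n * INR (2 * n + 1)) * x ^ (2 * n))%C))%C by ring.
    rewrite <- !CSeries_scal by (eapply AS_oddS || eapply AS_oddD; eauto; lra).
    rewrite <- CSeries_plus by auto.
    rewrite <- CSeries_plus by (try apply AS_plus; auto).
    apply CSeries_ext. intros n. unfold P.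
    replace (S (2*n)) with (2*n+1)%nat by lia.
    rewrite <- Hyx, RtoC_mult. ring. }
  rewrite Eq.
  assert (HPb : forall n, Cmod (P n) <= Maj r n * (Cmod h ^ 2 / r)).
  { intros n. unfold P. rewrite Cmod_mult, Cmod_R.
    assert (Hb := pow_diff_bound x h r (2*n) (proj1 Hr) (Rlt_le _ _ Hxr) ltac:(rewrite <- Hyx; auto)).
    pose proof (Ha n).
    pose proof (Cmod_ge_0 ((x + h) ^ S (2 * n) - x ^ S (2 * n) - RtoC (INR (S (2 * n))) * x ^ (2 * n) * h)%C).
    eapply Rle_trans. apply Rmult_le_compat_r; [auto| exact H].
    rewrite Rmult_1_l. eapply Rle_trans; [exact Hb|].
    unfold Maj. replace (2*n+1)%nat with (S (2*n)) by lia. right; field; lra. }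
  assert (HPAS : AS P).
  { apply (AS_le _ _ HPb). apply exR_scal_r. apply Maj_ex; auto. }
  eapply Rle_trans; [apply CSeries_norm; auto|].
  eapply Rle_trans. apply (Series_le_gen _ (fun n => Maj r n * (Cmod h ^ 2 / r))); auto.
  apply exR_scal_r; apply Maj_ex; auto.
  rewrite Series_scal_r. fold SM.
  pose proof (Cmod_ge_0 h).
  assert (SM * Cmod h <= eps * r).
  { apply Rlt_le in Hh2. apply Rle_div_r in Hh2; [|lra]. nra. }
  replace (SM * (Cmod h ^ 2 / r)) with ((SM * Cmod h) * Cmod h / r) by (field; lra).
  apply Rle_div_l; [lra|]. nra.
Qed.
End Odd.

Lemma geom_ex w : Cmod w < 1 -> ex_series (fun n => Cmod w ^ n).
Proof. intros Hw. apply ex_series_geom. rewrite Rabs_pos_eq by apply Cmod_ge_0. auto. Qed.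

Lemma AS_geom (B : nat -> R) w k : (forall n, Rabs (B n) <= 1) -> Cmod w < 1 ->
  AS (fun n => RtoC (B n) * w ^ (n + k))%C.
Proof.
  intros HB Hw. apply (AS_le _ (fun n => Cmod w ^ n * Cmod w ^ k)).
  - intros n. rewrite Cmod_mult, Cmod_R, Cmod_pow, pow_add.
    pose proof (HB n). pose proof (pow_le (Cmod w) (n) (Cmod_ge_0 w)).
    pose proof (pow_le (Cmod w) (k) (Cmod_ge_0 w)).
    pose proof (Rabs_pos (B n)).
    assert (0 <= Cmod w ^ n * Cmod w ^ k) by nra. nra.
  - apply exR_scal_r. apply geom_ex; auto.
Qed.

Lemma CSeries_zero : CSeries (fun _ => RtoC 0) = RtoC 0.
Proof. unfold CSeries. simpl. rewrite Series_zero. reflexivity. Qed.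

Lemma shift_id (B : nat -> R) (HB : forall n, Rabs (B n) <= 1) w (Hw : Cmod w < 1) :
  (CSeries (fun n => RtoC (B n) * w ^ n) * (1 - w) =
   RtoC (B 0%nat) + CSeries (fun n => RtoC (B (S n) - B n) * w ^ (S n)))%C.
Proof.
  assert (A0 : AS (fun n => RtoC (B n) * w ^ n)%C).
  { pose proof (AS_geom B w 0 HB Hw) as H; unfold AS in *.
    eapply ex_series_ext; [|exact H]; intros n; simpl; rewrite Nat.add_0_r; reflexivity. }
  assert (A1 : AS (fun n => RtoC (B (S n)) * w ^ (S n))%C).
  { assert (HB' : forall n, Rabs (B (S n)) <= 1) by auto.
    pose proof (AS_geom (fun n => B (S n)) w 1 HB' Hw) as H; unfold AS in *.
    eapply ex_series_ext; [|exact H]; intros n; simpl; rewrite Nat.add_1_r; reflexivity. }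
  assert (A2 : AS (fun n => RtoC (B n) * w ^ (S n))%C).
  { pose proof (AS_geom B w 1 HB Hw) as H; unfold AS in *.
    eapply ex_series_ext; [|exact H]; intros n; simpl; rewrite Nat.add_1_r; reflexivity. }
  assert (HX := CSeries_shift _ A0). cbv beta in HX.
  assert (HU : CSeries (fun n => RtoC (B n) * w ^ (S n))%C = (w * CSeries (fun n => RtoC (B n) * w ^ n))%C).
  { rewrite <- CSeries_scal by auto. apply CSeries_ext; intros n; simpl; ring. }
  assert (HV : CSeries (fun n => RtoC (B (S n) - B n) * w ^ (S n))%C =
     (CSeries (fun n => RtoC (B (S n)) * w ^ (S n)) + (-1) * CSeries (fun n => RtoC (B n) * w ^ (S n)))%C).
  { rewrite <- CSeries_scal by auto. rewrite <- CSeries_plus by (try apply AS_scal; auto).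
    apply CSeries_ext; intros n. rewrite RtoC_minus. ring. }
  rewrite HV, HU. rewrite HX. ring.
Qed.

Lemma re_pos (B : nat -> R) (HB0 : B 0%nat = 1) (Hpos : forall n, 0 < B n)
  (Hdec : forall n, B (S n) <= B n) w (Hw : Cmod w < 1) :
  0 < Re (CSeries (fun n => RtoC (B n) * w ^ n) * (1 - w))%C.
Proof.
  assert (Hle1 : forall n, B n <= 1).
  { induction n. lra. pose proof (Hdec n); lra. }
  assert (HB : forall n, Rabs (B n) <= 1).
  { intros n; rewrite Rabs_pos_eq; [apply Hle1| apply Rlt_le, Hpos]. }
  assert (HD : forall n, Rabs (B (S n) - B n) <= 1).
  { intros n. pose proof (Hdec n); pose proof (Hpos n); pose proof (Hpos (S n)); pose proof (Hle1 n).
    rewrite Rabs_left1 by lra. lra. }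
  set (rho := Cmod w).
  assert (Hr0 : 0 <= rho) by apply Cmod_ge_0.
  assert (Hrw : Cmod (RtoC rho) < 1) by (rewrite Cmod_R, Rabs_pos_eq; auto).
  assert (ASV : forall v, Cmod v < 1 -> AS (fun n => RtoC (B (S n) - B n) * v ^ (S n))%C).
  { intros v Hv. pose proof (AS_geom (fun n => B (S n) - B n) v 1 HD Hv) as H; unfold AS in *.
    eapply ex_series_ext; [|exact H]; intros n; simpl; rewrite Nat.add_1_r; reflexivity. }
  assert (ReV : forall v, Re (CSeries (fun n => RtoC (B (S n) - B n) * v ^ (S n))%C) =
     Series (fun n => (B (S n) - B n) * Re (v ^ (S n))%C)).
  { intros v. unfold CSeries at 1. unfold Re at 1. cbn [fst]. apply Series_ext; intros n. apply re_scal_l. }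
  rewrite (shift_id B HB w Hw). rewrite re_plus, re_RtoC, ReV.
  assert (Hrho := shift_id B HB (RtoC rho) Hrw).
  apply (f_equal Re) in Hrho. rewrite re_plus, re_RtoC, ReV in Hrho.
  assert (Hre1 : forall n, Re (RtoC rho ^ n)%C = rho ^ n).
  { intros n. rewrite <- RtoC_pow, re_RtoC. reflexivity. }
  rewrite (Series_ext _ (fun n => (B (S n) - B n) * rho ^ (S n))) in Hrho
    by (intros n; rewrite Hre1; reflexivity).
  replace (RtoC 1 - RtoC rho)%C with (RtoC (1 - rho)) in Hrho by (rewrite RtoC_minus; reflexivity).
  rewrite re_scal_r in Hrho.
  assert (HXr : 1 <= Re (CSeries (fun n => RtoC (B n) * RtoC rho ^ n)%C)).
  { unfold CSeries at 1. unfold Re at 1. cbn [fst].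
    rewrite (Series_ext _ (fun n => B n * rho ^ n)) by (intros n; rewrite re_scal_l, Hre1; reflexivity).
    assert (Hex : ex_series (fun n => B n * rho ^ n)).
    { apply (ex_series_le_R _ (fun n => rho ^ n)).
      intros n. rewrite Rabs_mult, (Rabs_pos_eq (rho ^ n)) by (apply pow_le; auto).
      pose proof (HB n). pose proof (pow_le rho n Hr0). pose proof (Rabs_pos (B n)). nra.
      apply ex_series_geom. rewrite Rabs_pos_eq; auto. }
    rewrite Series_incr_1 by auto. rewrite HB0, pow_O, Rmult_1_l.
    assert (0 <= Series (fun k => B (S k) * rho ^ S k)).
    { rewrite <- Series_zero. apply Series_le.
      intros n; split; [lra|]. apply Rmult_le_pos; [apply Rlt_le, Hpos| apply pow_le; auto].
      apply (ex_series_le_R _ (fun n => rho ^ S n)).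
      intros n. rewrite Rabs_mult, (Rabs_pos_eq (rho ^ S n)) by (apply pow_le; auto).
      pose proof (HB (S n)). pose proof (pow_le rho (S n) Hr0). pose proof (Rabs_pos (B (S n))). nra.
      apply exR_scal. apply ex_series_geom. rewrite Rabs_pos_eq; auto. }
    lra. }
  assert (Hcmp : Series (fun n => (B (S n) - B n) * rho ^ (S n)) <=
                 Series (fun n => (B (S n) - B n) * Re (w ^ (S n))%C)).
  { apply Series_le_gen.
    - apply (ex_series_le_R _ (fun n => rho ^ S n)).
      intros n. rewrite Rabs_mult, (Rabs_pos_eq (rho ^ S n)) by (apply pow_le; auto).
      pose proof (HD n). pose proof (pow_le rho (S n) Hr0). pose proof (Rabs_pos (B (S n) - B n)). nra.
      apply exR_scal. apply ex_series_geom. rewrite Rabs_pos_eq; auto.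
    - pose proof (AS_re _ (ASV w Hw)) as H.
      eapply ex_series_ext; [|exact H]. intros n; cbv beta. apply re_scal_l.
    - intros n. pose proof (Hdec n).
      assert (Re (w ^ S n)%C <= rho ^ S n).
      { eapply Rle_trans; [apply Rle_abs|]. eapply Rle_trans; [apply re_le_Cmod|].
        rewrite Cmod_pow; right; reflexivity. }
      nra. }
  rewrite HB0 in *.
  assert (0 < 1 - rho) by (unfold rho; lra).
  nra.
Qed.

Lemma normCR (x : C_R_NormedModule) : norm x = Cmod x.
Proof.
  destruct x as [a b]. unfold norm; simpl. unfold prod_norm, Cmod; simpl.
  unfold norm; simpl.
  change (abs a) with (Rabs a); change (abs b) with (Rabs b).
  rewrite !Rmult_1_r, <- !Rabs_mult. rewrite !(Rabs_pos_eq (_ * _)) by nra. reflexivity.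
Qed.

Lemma CR_derive (Phi : C -> C) p L :
  is_derive Phi p L ->
  filterdiff (K:=R_AbsRing) (U:=C_R_NormedModule) (V:=C_R_NormedModule) Phi (locally (p : C_R_NormedModule)) (fun u => (u * L)%C).
Proof.
  intros [_ HD]. split.
  - split.
    + intros x y. change ((Cplus x y) * L = Cplus (x*L) (y*L))%C. ring.
    + intros k x. destruct x as [x1 x2]; destruct L as [l1 l2]. cbv [scal Cmult]. simpl. unfold prod_scal, scal; simpl. unfold mult; simpl. match goal with |- ?g => idtac g end. f_equal; ring.
    + exists (Cmod L + 1). split. pose proof (Cmod_ge_0 L); lra.
      intros x. rewrite !normCR, Cmod_mult. pose proof (Cmod_ge_0 x). pose proof (Cmod_ge_0 L). nra.
  - intros x Hx. assert (Hx' := is_filter_lim_locally_unique (K:=R_AbsRing) (V:=C_R_NormedModule) p x Hx). subst x.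
    assert (Hp : is_filter_lim (locally (T:=AbsRing_UniformSpace C_AbsRing) p) p) by (intros P HP; exact HP).
    specialize (HD p Hp). intros eps. specialize (HD eps).
    apply locally_C.
    eapply filter_imp; [|exact HD]. intros y Hy. simpl in Hy.
    rewrite !normCR. exact Hy.
Qed.

Lemma chain_RC (E : R -> C) (Phi : C -> C) t E' L :
  is_derive (K:=R_AbsRing) (V:=C_R_NormedModule) E t E' -> is_derive Phi (E t) L ->
  is_derive (K:=R_AbsRing) (V:=C_R_NormedModule) (fun s => Phi (E s)) t (E' * L)%C.
Proof.
  intros H1 H2. unfold is_derive in *.
  eapply filterdiff_ext_lin.
  - eapply (filterdiff_comp' E Phi). exact H1. apply CR_derive; exact H2.
  - intros y. destruct E' as [e1 e2]; destruct L as [l1 l2].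
    cbv [scal Cmult]. simpl. unfold prod_scal, scal; simpl. unfold mult; simpl. f_equal; ring.
Qed.

Lemma re_derive (phi : R -> C) t l :
  is_derive (K:=R_AbsRing) (V:=C_R_NormedModule) phi t l ->
  is_derive (fun s => Re (phi s)) t (Re l).
Proof.
  intros H. unfold is_derive in *.
  eapply filterdiff_ext_lin.
  - apply (filterdiff_comp' phi (fun p : C_R_NormedModule => fst p)). exact H.
    apply filterdiff_linear. apply is_linear_fst.
  - intros y. destruct l. reflexivity.
Qed.

Lemma pair_derive (f g : R -> R) t df dg : is_derive f t df -> is_derive g t dg ->
  is_derive (K:=R_AbsRing) (V:=C_R_NormedModule) (fun s => (f s, g s) : C) t ((df, dg) : C).
Proof.
  intros H1 H2. unfold is_derive in *.
  eapply filterdiff_ext_lin.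
  - apply (filterdiff_comp_2 (W:=C_R_NormedModule) f g (fun a b => (a, b))). exact H1. exact H2.
    apply (filterdiff_linear (fun p : prod_NormedModule R_AbsRing R_NormedModule R_NormedModule => (fst p, snd p))).
    apply is_linear_prod; [apply is_linear_fst| apply is_linear_snd].
  - intros y. reflexivity.
Qed.

Definition Mob (y : C) : C := ((y - 1) / (y + 1))%C.

Lemma Cmod_lb (x y : C) : Cmod (x + 1) - Cmod (y - x) <= Cmod (y + 1).
Proof.
  replace (x + 1)%C with ((y + 1) + (x - y))%C by ring.
  pose proof (Cmod_triangle (y+1) (x - y)).
  replace (x - y)%C with (- (y - x))%C in H by ring. rewrite Cmod_opp in H.
  replace ((y + 1) + (x - y))%C with ((y + 1) + - (y - x))%C by ring. lra.
Qed.

Lemma Cmod_neq0 (u : C) : 0 < Cmod u -> u <> 0%C.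
Proof. intros H Hu. rewrite Hu, Cmod_0 in H. lra. Qed.

Lemma Mob_deriv x : (x + 1 <> 0)%C -> is_derive (K:=C_AbsRing) (V:=AbsRing_NormedModule C_AbsRing) Mob x (2 / ((x+1)*(x+1)))%C.
Proof.
  intros Hx. apply derive_C_est'. intros eps Heps.
  set (m := Cmod (x + 1)).
  assert (Hm : 0 < m) by (apply Cmod_gt_0; auto).
  exists (Rmin (m/2) (eps * (m*m*m) / 4)). split.
  { apply Rmin_pos. lra. apply Rdiv_lt_0_compat; [|lra]. apply Rmult_lt_0_compat; auto.
    repeat apply Rmult_lt_0_compat; auto. }
  intros y Hy.
  set (h := (y - x)%C) in *.
  assert (Hh1 : Cmod h < m / 2) by (eapply Rlt_le_trans; [exact Hy| apply Rmin_l]).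
  assert (Hh2 : Cmod h < eps * (m*m*m) / 4) by (eapply Rlt_le_trans; [exact Hy| apply Rmin_r]).
  assert (Hy1 : m / 2 <= Cmod (y + 1)) by (pose proof (Cmod_lb x y); fold h m in H; lra).
  assert (Hy1' : (y + 1 <> 0)%C) by (apply Cmod_neq0; lra).
  assert (Eq : (Mob y - Mob x - h * (2 / ((x + 1) * (x + 1))))%C =
     (- (2 * (h * h) / ((y + 1) * ((x + 1) * (x + 1)))))%C).
  { unfold Mob, h. field. split; auto. }
  rewrite Eq, Cmod_opp. rewrite Cmod_div, !Cmod_mult.
  2:{ apply Cmod_neq0. rewrite !Cmod_mult. fold m. apply Rmult_lt_0_compat; [lra|]. nra. }
  replace (Cmod 2) with 2 by (rewrite Cmod_R, Rabs_pos_eq; lra).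
  fold m. pose proof (Cmod_ge_0 h).
  apply Rle_div_l. apply Rmult_lt_0_compat; [lra|nra].
  assert (Cmod h * 4 <= eps * (m * m * m)) by (apply Rlt_le in Hh2; apply Rle_div_r in Hh2; lra).
  assert (2 * (Cmod h * Cmod h) <= eps * Cmod h * (m / 2 * (m * m))) by nra.
  assert (eps * Cmod h * (m / 2 * (m * m)) <= eps * Cmod h * (Cmod (y + 1) * (m * m))).
  { apply Rmult_le_compat_l. apply Rmult_le_pos; lra. apply Rmult_le_compat_r; nra. }
  lra.
Qed.

Definition cexp (s th : R) : C := (exp s * cos th, exp s * sin th).

Lemma polar (z : C) : 0 < Re z -> exists s th, - PI / 2 < th < PI / 2 /\ z = cexp s th.
Proof.
  intros Hz. destruct z as [x y]. unfold Re in Hz; simpl in Hz.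
  assert (Hm : 0 < Cmod (x, y)) by (apply Cmod_gt_0; intro H; injection H; lra).
  exists (ln (Cmod (x, y))), (atan (y / x)). split. apply atan_bound.
  unfold cexp. rewrite exp_ln by auto. rewrite cos_atan, sin_atan.
  assert (Hs : sqrt (1 + (y / x)²) = Cmod (x, y) / x).
  { rewrite <- (sqrt_Rsqr (Cmod (x, y) / x)) by (apply Rlt_le, Rdiv_lt_0_compat; auto).
    f_equal. unfold Rsqr. unfold Rdiv.
    assert (Cmod (x,y) * Cmod (x,y) = x * x + y * y).
    { pose proof (Cmod2_alt (x,y)). simpl in H. unfold Re, Im in H; simpl in H. nra. }
    replace (Cmod (x, y) * / x * (Cmod (x, y) * / x)) with ((Cmod (x,y) * Cmod (x,y)) / (x*x)) by (field; lra).
    rewrite H. field. lra. }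
  rewrite Hs. f_equal; field; lra.
Qed.

Lemma re_cayley (z : C) : Cmod z < 1 -> 0 < Re ((1 + z) / (1 - z))%C.
Proof.
  intros Hz. destruct z as [a b].
  assert (H2 : a * a + b * b < 1).
  { pose proof (Cmod2_alt (a,b)). unfold Re, Im in H; simpl in H.
    pose proof (Cmod_ge_0 (a,b)). nra. }
  assert (Hd : 0 < (1 - a) * (1 - a) + b * b) by nra.
  assert (E : Re ((1 + (a, b)) / (1 - (a, b)))%C = (1 - a*a - b*b) / ((1 - a) * (1 - a) + b * b)).
  { unfold Cdiv, Cinv, Cmult, Cplus, Cminus, Copp, Re, RtoC; simpl. field. lra. }
  rewrite E. apply Rdiv_lt_0_compat; lra.
Qed.

Lemma one_minus_nz (z : C) : Cmod z < 1 -> (1 - z <> 0)%C.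
Proof.
  intros Hz H. assert (Hz1 : z = RtoC 1) by (replace z with (1 - (1 - z))%C by ring; rewrite H; ring).
  rewrite Hz1, Cmod_1 in Hz; lra.
Qed.

Lemma cayley_inv (z : C) : Cmod z < 1 -> Mob ((1 + z) / (1 - z))%C = z.
Proof.
  intros Hz. pose proof (one_minus_nz z Hz) as H1.
  unfold Mob. field. split. exact H1.
  intro H. assert (H2 : RtoC 2 = RtoC 0) by (rewrite <- H; ring). apply RtoC_inj in H2; lra.
Qed.

Lemma Mob_disk (E : C) : 0 < Re E -> Cmod (Mob E) < 1 /\ (E + 1 <> 0)%C.
Proof.
  intros HE. destruct E as [a b]. unfold Re in HE; simpl in HE.
  assert (Hn : ((a, b) + 1 <> 0)%C).
  { intro H. injection H. intros. lra. }
  split; auto. unfold Mob. rewrite Cmod_div by auto.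
  assert (Hp : 0 < Cmod ((a, b) + 1)%C) by (apply Cmod_gt_0; auto).
  apply Rlt_div_l; auto. rewrite Rmult_1_l.
  unfold Cmod, Cplus, Cminus, Copp, RtoC; simpl.
  apply sqrt_lt_1_alt. split.
  - rewrite !Rmult_1_r. apply Rplus_le_le_0_compat; apply Rle_0_sqr.
  - rewrite !Rmult_1_r. nra.
Qed.

Lemma cexp_re s th : - PI / 2 < th < PI / 2 -> 0 < Re (cexp s th).
Proof.
  intros H. unfold cexp, Re; simpl. apply Rmult_lt_0_compat. apply exp_pos.
  apply cos_gt_0; lra.
Qed.

Lemma mul_deriv (c x : C) : is_derive (fun u => u * c)%C x c.
Proof.
  apply derive_C_est. intros eps Heps. exists 1. split. lra. intros y Hy.
  replace (y * c - x * c - (y - x) * c)%C with (RtoC 0) by ring. rewrite Cmod_0.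
  pose proof (Cmod_ge_0 (y - x)). nra.
Qed.

Lemma univalent_of (f fd : C -> C)
  (Hd : forall u, Cmod u < 1 -> is_derive f u (fd u))
  (Hp : forall u, Cmod u < 1 -> 0 < Re (fd u * (1 - u * u))%C)
  z w : Cmod z < 1 -> Cmod w < 1 -> f z = f w -> z = w.
Proof.
  intros Hz Hw Hf. destruct (Ceq_dec z w) as [|Hne]; auto. exfalso.
  destruct (polar _ (re_cayley z Hz)) as [s1 [t1 [Ht1 Hz1]]].
  destruct (polar _ (re_cayley w Hw)) as [s0 [t0 [Ht0 Hw0]]].
  set (K := (s1 - s0, t1 - t0) : C).
  assert (HK : K <> 0%C).
  { intro H. assert (H1 : fst K = 0 /\ snd K = 0) by (rewrite H; simpl; auto).
    unfold K in H1; simpl in H1. apply Hne.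
    rewrite <- (cayley_inv z Hz), <- (cayley_inv w Hw), Hz1, Hw0.
    replace s1 with s0 by lra. replace t1 with t0 by lra. reflexivity. }
  set (Ep := fun t => cexp (s0 + t*(s1-s0)) (t0 + t*(t1-t0))).
  assert (Hth : forall t, 0 <= t <= 1 -> -PI/2 < t0 + t*(t1-t0) < PI/2).
  { intros t Ht. replace (t0 + t*(t1-t0)) with ((1-t)*t0 + t*t1) by ring.
    destruct (Rle_dec t0 t1).
    - assert (0 <= t * (t1 - t0)) by (apply Rmult_le_pos; lra).
      assert (0 <= (1 - t) * (t1 - t0)) by (apply Rmult_le_pos; lra).
      split; nra.
    - assert (0 <= t * (t0 - t1)) by (apply Rmult_le_pos; lra).
      assert (0 <= (1 - t) * (t0 - t1)) by (apply Rmult_le_pos; lra).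
      split; nra. }
  assert (HE : forall t, 0 <= t <= 1 -> 0 < Re (Ep t)).
  { intros t Ht. apply cexp_re. apply Hth; auto. }
  set (psi := fun t => Re (f (Mob (Ep t)) * / K)%C).
  set (dpsi := fun t => Re (((K * Ep t) * (2 / ((Ep t + 1) * (Ep t + 1)) * fd (Mob (Ep t)))) * / K)%C).
  assert (HD : forall t, 0 <= t <= 1 -> is_derive psi t (dpsi t) /\ 0 < dpsi t).
  { intros t Ht. destruct (Mob_disk _ (HE t Ht)) as [Hdisk Hn1].
    split.
    - assert (HEp : is_derive (K:=R_AbsRing) (V:=C_R_NormedModule) Ep t (K * Ep t)%C).
      { replace (K * Ep t)%C with
          ((((s1 - s0) * exp (s0 + t*(s1-s0)) * cos (t0 + t*(t1-t0)) - (t1 - t0) * exp (s0 + t*(s1-s0)) * sin (t0 + t*(t1-t0))),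
            ((s1 - s0) * exp (s0 + t*(s1-s0)) * sin (t0 + t*(t1-t0)) + (t1 - t0) * exp (s0 + t*(s1-s0)) * cos (t0 + t*(t1-t0)))) : C).
        2:{ unfold K, Ep, cexp, Cmult; simpl. f_equal; ring. }
        unfold Ep, cexp. apply pair_derive; auto_derive; auto; ring. }
      assert (HM := Mob_deriv _ Hn1).
      assert (Hc := is_derive_comp f Mob (Ep t) (fd (Mob (Ep t))) _ (Hd _ Hdisk) HM).
      assert (H1 := chain_RC Ep (fun u => f (Mob u)) t _ _ HEp Hc).
      assert (H2 := chain_RC _ (fun u => u * / K)%C t _ _ H1 (mul_deriv (/K) _)).
      exact (re_derive _ t _ H2).
    - unfold dpsi. set (E := Ep t) in *.
      assert (Id : (((K * E) * (2 / ((E + 1) * (E + 1)) * fd (Mob E))) * / K)%C =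
                   (RtoC (1/2) * (fd (Mob E) * (1 - Mob E * Mob E)))%C).
      { unfold Mob. rewrite RtoC_div by lra. field. repeat split; auto; intro H; try (apply RtoC_inj in H); lra. }
      rewrite Id, re_scal_l. specialize (Hp (Mob E) Hdisk). lra. }
  destruct (MVT_gen psi 0 1 dpsi) as [c [Hc Heq]].
  - intros x Hx. rewrite Rmin_left, Rmax_right in Hx by lra. apply HD; lra.
  - intros x Hx. rewrite Rmin_left, Rmax_right in Hx by lra.
    apply continuity_pt_filterlim. apply (ex_derive_continuous psi x).
    exists (dpsi x). apply HD; lra.
  - rewrite Rmin_left, Rmax_right in Hc by lra.
    assert (P1 : psi 1 = Re (f z * / K)%C).
    { unfold psi, Ep. replace (s0 + 1 * (s1 - s0)) with s1 by ring.
      replace (t0 + 1 * (t1 - t0)) with t1 by ring. rewrite <- Hz1, cayley_inv; auto. }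
    assert (P0 : psi 0 = Re (f w * / K)%C).
    { unfold psi, Ep. replace (s0 + 0 * (s1 - s0)) with s0 by ring.
      replace (t0 + 0 * (t1 - t0)) with t0 by ring. rewrite <- Hw0, cayley_inv; auto. }
    rewrite P1, P0, Hf in Heq. destruct (HD c Hc) as [_ Hpos]. nra.
Qed.

Lemma cpow_odd (z : C) n : (z ^ (2 * n + 1))%C = (z * (z * z) ^ n)%C.
Proof.
  rewrite Cpow_add_r, Cpow_mult_r, Cpow_1_r. replace (z ^ 2)%C with (z * z)%C by (simpl; ring). ring.
Qed.

Lemma cpow_even (z : C) n : (z ^ (2 * n))%C = ((z * z) ^ n)%C.
Proof. rewrite Cpow_mult_r. replace (z ^ 2)%C with (z * z)%C by (simpl; ring). reflexivity. Qed.

Lemma Cmod_sq_lt (z : C) : Cmod z < 1 -> Cmod (z * z) < 1.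
Proof. intros H. rewrite Cmod_mult. pose proof (Cmod_ge_0 z). nra. Qed.

Lemma deriv_value (B : nat -> R) (HB : forall n, Rabs (B n) <= 1) (u : C) :
  Cmod u < 1 ->
  oddD B u = CSeries (fun n => RtoC (B n * INR (2*n+1)) * (u * u) ^ n)%C.
Proof.
  intros Hu. unfold oddD. apply CSeries_ext. intros n. rewrite cpow_even. reflexivity.
Qed.

Lemma geom_inv (w : C) : Cmod w < 1 ->
  (CSeries (fun n => RtoC 1 * w ^ n) * (1 - w))%C = RtoC 1.
Proof.
  intros Hw. rewrite (shift_id (fun _ => 1)) by (auto; intros; rewrite Rabs_R1; lra).
  rewrite (CSeries_ext _ (fun _ => RtoC 0)).
  rewrite CSeries_zero. ring.
  intros n. replace (1 - 1) with 0 by ring. ring.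
Qed.

Theorem theorem2p2 (a b c d e : R) :
  0 < a -> 0 < b -> 0 < c ->
  not_nonpos_int d -> not_nonpos_int e ->
  d * e >= 3 * a * b * c ->
  d + e >= Rmax (a + b + c)
             (Rmax (alpha_abc a b c)
                   (3 * (a * b + b * c + a * c) - 7 * a * b * c)) ->
  close_to_convex_wrt (fun z => (z * F32 a b c d e (z * z))%C) half_log_ratio.
Proof.
  intros Ha Hb Hc _ _ H1 Hmax.
  assert (H2 : d + e >= a + b + c) by (pose proof (Rmax_l (a+b+c) (Rmax (alpha_abc a b c) (3 * (a * b + b * c + a * c) - 7 * a * b * c))); lra).
  assert (H3 : d + e >= alpha_abc a b c).
  { pose proof (Rmax_r (a+b+c) (Rmax (alpha_abc a b c) (3 * (a * b + b * c + a * c) - 7 * a * b * c))).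
    pose proof (Rmax_l (alpha_abc a b c) (3 * (a * b + b * c + a * c) - 7 * a * b * c)). lra. }
  assert (H4 : d + e >= 3 * (a * b + b * c + a * c) - 7 * a * b * c).
  { pose proof (Rmax_r (a+b+c) (Rmax (alpha_abc a b c) (3 * (a * b + b * c + a * c) - 7 * a * b * c))).
    pose proof (Rmax_r (alpha_abc a b c) (3 * (a * b + b * c + a * c) - 7 * a * b * c)). lra. }
  assert (Habc : 0 < a * b * c) by (repeat apply Rmult_lt_0_compat; auto).
  assert (Hd : 0 < d /\ 0 < e).
  { destruct (Rlt_or_le 0 d); destruct (Rlt_or_le 0 e); try nra. }
  destruct Hd as [Hd He].
  set (A := Acoef a b c d e).
  assert (HA : forall n, Rabs (A n) <= 1) by (intros n; apply (Acoef_le1 a b c d e); auto).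
  set (G := fun n : nat => 1 / INR (2 * n + 1)).
  assert (HG : forall n, Rabs (G n) <= 1).
  { intros n. unfold G. assert (1 <= INR (2*n+1)) by (apply (le_INR 1); lia).
    rewrite Rabs_pos_eq. apply Rle_div_l; lra. apply Rlt_le, Rdiv_lt_0_compat; lra. }
  set (f := fun z => (z * F32 a b c d e (z * z))%C).
  assert (Hfeq : forall z, Cmod z < 1 -> f z = oddS A z).
  { intros z Hz. unfold f, F32, oddS.
    assert (Hw := Cmod_sq_lt z Hz).
    assert (HAS : AS (fun n => RtoC (A n) * (z * z) ^ n)%C).
    { pose proof (AS_geom A (z*z) 0 HA Hw) as H; unfold AS in *.
      eapply ex_series_ext; [|exact H]; intros n; simpl; rewrite Nat.add_0_r; reflexivity. }
    fold (Acoef a b c d e). fold A.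
    rewrite <- CSeries_scal by exact HAS.
    apply CSeries_ext. intros n. rewrite cpow_odd. unfold A, Acoef. ring. }
  assert (Hfd : forall z, Cmod z < 1 -> is_derive f z (oddD A z)).
  { intros z Hz. apply (is_derive_ext_loc (oddS A)).
    - exists (mkposreal (1 - Cmod z) ltac:(simpl; lra)).
      intros y Hy. symmetry. apply Hfeq.
      change (Cmod (y - z) < 1 - Cmod z) in Hy.
      replace y with (z + (y - z))%C by ring.
      eapply Rle_lt_trans; [apply Cmod_triangle|]. lra.
    - apply odd_deriv; auto. }
  assert (Hgeq : forall z, half_log_ratio z = oddS G z).
  { intros z. unfold half_log_ratio, oddS. apply CSeries_ext. intros n.
    unfold G. assert (0 < INR (2 * n + 1)) by (apply lt_0_INR; lia).
    rewrite RtoC_div by lra. field. intro H0; apply RtoC_inj in H0; lra. }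
  assert (Hgd : forall z, Cmod z < 1 -> is_derive half_log_ratio z (oddD G z)).
  { intros z Hz. apply (is_derive_ext (oddS G)). intros; symmetry; apply Hgeq.
    apply odd_deriv; auto. }
  set (Bs := Bc a b c d e).
  assert (HBs0 : Bs 0%nat = 1) by apply Bc_0.
  assert (HBspos : forall n, 0 < Bs n) by (intros; apply Bc_pos; auto).
  assert (HBsdec : forall n, Bs (S n) <= Bs n) by (intros; apply (Bc_S a b c d e); auto).
  assert (HfdB : forall u, Cmod u < 1 -> oddD A u = CSeries (fun n => RtoC (Bs n) * (u * u) ^ n)%C).
  { intros u Hu. rewrite (deriv_value A HA u Hu). apply CSeries_ext; intros n.
    unfold Bs, Bc. fold A. rewrite Rmult_comm. reflexivity. }
  assert (HgdB : forall u, Cmod u < 1 -> oddD G u = CSeries (fun n => RtoC 1 * (u * u) ^ n)%C).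
  { intros u Hu. rewrite (deriv_value G HG u Hu). apply CSeries_ext; intros n.
    unfold G. assert (0 < INR (2 * n + 1)) by (apply lt_0_INR; lia).
    replace (1 / INR (2 * n + 1) * INR (2 * n + 1)) with 1 by (field; lra). reflexivity. }
  assert (Hpos : forall u, Cmod u < 1 -> 0 < Re (oddD A u * (1 - u * u))%C).
  { intros u Hu. rewrite HfdB by auto. apply re_pos; auto. apply Cmod_sq_lt; auto. }
  assert (Hquot : forall u, Cmod u < 1 -> (oddD A u / oddD G u)%C = (oddD A u * (1 - u * u))%C).
  { intros u Hu. assert (Hg := geom_inv (u * u) (Cmod_sq_lt u Hu)).
    rewrite <- (HgdB u Hu) in Hg.
    assert (Hnz : oddD G u <> 0%C).
    { intro H0. rewrite H0 in Hg. apply (f_equal Re) in Hg. simpl in Hg. lra. }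
    transitivity (oddD A u / oddD G u * (oddD G u * (1 - u * u)))%C. rewrite Hg; ring. field; auto. }
  split; [|split; [|split]].
  - split; [|split].
    + intros z Hz. exists (oddD A z). apply Hfd; auto.
    + unfold f. ring.
    + replace (RtoC 1) with (oddD A (RtoC 0)).
      apply Hfd. rewrite Cmod_0; lra.
      rewrite HfdB by (rewrite Cmod_0; lra).
      assert (HBs1 : forall n, Rabs (Bs n) <= 1).
      { intros n. rewrite Rabs_pos_eq by (apply Rlt_le; auto). apply (Bc_le1 a b c d e); auto. }
      assert (H00 : Cmod (RtoC 0 * RtoC 0) < 1) by (rewrite Cmult_0_l, Cmod_0; lra).
      assert (HAS : AS (fun n => RtoC (Bs n) * (RtoC 0 * RtoC 0) ^ n)%C).
      { pose proof (AS_geom Bs _ 0 HBs1 H00) as H; unfold AS in *.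
        eapply ex_series_ext; [|exact H]; intros n; simpl; rewrite Nat.add_0_r; reflexivity. }
      rewrite (CSeries_shift _ HAS).
      rewrite (CSeries_ext _ (fun _ => RtoC 0)). rewrite CSeries_zero. rewrite HBs0. simpl. ring.
      intros n. simpl. ring.
  - split.
    + intros z Hz. exists (oddD A z). apply Hfd; auto.
    + intros z w Hz Hw Hzw. apply (univalent_of f (oddD A)); auto.
  - intros z Hz. exists (oddD G z). apply Hgd; auto.
  - intros z f' g' Hz Hf' Hg'.
    apply is_C_derive_unique in Hf'. apply is_C_derive_unique in Hg'.
    rewrite (is_C_derive_unique _ _ _ (Hfd z Hz)) in Hf'.
    rewrite (is_C_derive_unique _ _ _ (Hgd z Hz)) in Hg'.
    rewrite <- Hf', <- Hg', Hquot by auto. apply Hpos; auto.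
Qed.
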